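(* Let $A$ be an algebra over a field $K$ and let $T:A\to A$ be a weak multiplier of $A$ such that $\langle T(A)\rangle\cap A_0=\{0\}$. Then $T$ is $K$-linear.
   Context: An algebra over $K$ is a $K$-vector space with a bilinear, not necessarily associative multiplication. A map $T:A\to A$ (not assumed linear) is a weak multiplier if $xT(y)=T(x)y$ for all $x,y\in A$. $\mathrm{Ann}_l(A)=\{a\in A: ax=0\ \forall x\in A\}$, $\mathrm{Ann}_r(A)=\{a\in A: xa=0\ \forall x\in A\}$, and $A_0=\mathrm{Ann}_l(A)\cap\mathrm{Ann}_r(A)$. For a subset $X\subseteq A$, $\langle X\rangle$ is the linear subspace spanned by $X$. *)

(* Defs.v *)
From HB Require Import structures.
From mathcomp Require Import all_boot all_order all_algebra.
Set Implicit Arguments. Unset Strict Implicit. Unset Printing Implicit Defensive.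
Import GRing.Theory.
Local Open Scope ring_scope.

(* A (not necessarily associative) algebra over K: a K-vector space V
   (lmodType K) with a multiplication mul : V -> V -> V that is bilinear. *)
Definition bilinear_mul (K : fieldType) (V : lmodType K) (mul : V -> V -> V) :=
  (forall (a : K) (x y z : V), mul (a *: x + y) z = a *: mul x z + mul y z) /\
  (forall (a : K) (x y z : V), mul z (a *: x + y) = a *: mul z x + mul z y).

Definition weak_multiplier (K : fieldType) (V : lmodType K)
  (mul : V -> V -> V) (T : V -> V) :=
  forall x y : V, mul x (T y) = mul (T x) y.

Definition ann_l (K : fieldType) (V : lmodType K) (mul : V -> V -> V) (a : V) :=
  forall x : V, mul a x = 0.
Definition ann_r (K : fieldType) (V : lmodType K) (mul : V -> V -> V) (a : V) :=
  forall x : V, mul x a = 0.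
Definition A0 (K : fieldType) (V : lmodType K) (mul : V -> V -> V) (a : V) :=
  ann_l mul a /\ ann_r mul a.

Definition in_span (K : fieldType) (V : lmodType K) (X : V -> Prop) (v : V) :=
  exists (n : nat) (c : 'I_n -> K) (x : 'I_n -> V),
    (forall i, X (x i)) /\ v = \sum_(i < n) c i *: x i.

Definition image_of (V : Type) (T : V -> V) (v : V) := exists y, v = T y.

Definition K_linear (K : fieldType) (V : lmodType K) (T : V -> V) :=
  forall (a : K) (x y : V), T (a *: x + y) = a *: T x + T y.

(* Main.v *)
Require Import Defs.
From mathcomp Require Import all_boot all_order all_algebra.
Import GRing.Theory.
Local Open Scope ring_scope.

Theorem proposition2p3 (K : fieldType) (V : lmodType K) (mul : V -> V -> V)
  (T : V -> V) :
  bilinear_mul mul ->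
  weak_multiplier mul T ->
  (forall v : V, in_span (image_of T) v -> A0 mul v -> v = 0) ->
  K_linear T.
Proof.
move=> [Hl Hr] Hw H a x y.
have mul0l : forall z, mul 0 z = 0.
  move=> z; have := Hl 1 0 0 z; rewrite scale1r addr0.
  move=> E; by apply: (@addrI _ (mul 0 z)); rewrite addr0 {3}E scale1r.
have mul0r : forall z, mul z 0 = 0.
  move=> z; have := Hr 1 0 0 z; rewrite scale1r addr0.
  move=> E; by apply: (@addrI _ (mul z 0)); rewrite addr0 {3}E scale1r.
have mulZl : forall b u z, mul (b *: u) z = b *: mul u z.
  by move=> b u z; have := Hl b u 0 z; rewrite !addr0 mul0l addr0.
have mulZr : forall b u z, mul z (b *: u) = b *: mul z u.
  by move=> b u z; have := Hr b u 0 z; rewrite !addr0 mul0r addr0.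
have mulDl : forall u w z, mul (u + w) z = mul u z + mul w z.
  by move=> u w z; have := Hl 1 u w z; rewrite !scale1r.
have mulDr : forall u w z, mul z (u + w) = mul z u + mul z w.
  by move=> u w z; have := Hr 1 u w z; rewrite !scale1r.
set v := T (a *: x + y) + (-a) *: T x + (-1) *: T y.
suff : v = 0.
  rewrite /v scaleN1r scaleNr -addrA -opprD => /eqP; rewrite subr_eq0 => /eqP.
  by [].
apply: H.
  exists 3%N, (fun i : 'I_3 => if val i == 0%N then 1 else if val i == 1%N then -a else -1).
  exists (fun i : 'I_3 => if val i == 0%N then T (a *: x + y) else if val i == 1%N then T x else T y).
  split.
    move=> i; case: ifP => _; first by eexists.
    by case: ifP => _; eexists.
  by rewrite !big_ord_recl big_ord0 /= addr0 scale1r addrA.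
split=> z.
  rewrite /v !mulDl !mulZl -!Hw Hl scaleNr scaleN1r.
  by rewrite (addrC (a *: _)) addrK subrr.
rewrite /v !mulDr !mulZr !Hw Hr scaleNr scaleN1r.
by rewrite (addrC (a *: _)) addrK subrr.
Qed.
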